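(* Let $N\ge 4$ be an integer and $a>0$ real. Let $H=H^{(N)}(a)$ be the real $N\times N$ tridiagonal matrix with $H_{nn}=a+2n-1$, $H_{n,n+1}=-n$, $H_{n+1,n}=-(a+n)$, all other entries zero, and write $D_n(a)=\prod_{j=1}^{n-1}(a+j)$. Then there exists a real symmetric heptadiagonal (bandwidth $3$) $N\times N$ matrix $\mathcal P_3=\mathcal P_3^{(N)}(a)$ with $H^\dagger\mathcal P_3=\mathcal P_3H$ whose entries are $(\mathcal P_3)_{11}=(\mathcal P_3)_{12}=(\mathcal P_3)_{13}=(\mathcal P_3)_{22}=0$, $(\mathcal P_3)_{14}=1$, $$(\mathcal P_3)_{nn}=-\frac{2(n-1)(n-2)\,(n-1)!\,(3a+5n-6)}{3D_n(a)}\quad(n=2,\dots,N-1),$$ $$(\mathcal P_3)_{n,n+1}=\frac{(n-1)\,n!\,(a+5n-7)}{2D_n(a)}\quad(n=2,\dots,N-2),\qquad (\mathcal P_3)_{n,n+2}=-\frac{(n-1)\,(n+1)!}{D_n(a)}\quad(n=2,\dots,N-2),$$ $$(\mathcal P_3)_{n,n+3}=\frac{(n+2)!}{6D_n(a)}\quad(n=2,\dots,N-3),$$ (the remaining entries $(\mathcal P_3)_{N-1,N}=(\mathcal P_3)_{N,N-1}$ and $(\mathcal P_3)_{NN}$ being some real numbers depending on $N$ and $a$). Consequently, with $\Theta_0,\mathcal P_1,\mathcal P_2$ as in the context, for all real $\alpha,\beta,\gamma$ the matrix $\Theta_3=\Theta_0+\alpha\mathcal P_1+\beta\mathcal P_2+\gamma\mathcal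 P_3$ satisfies $H^\dagger\Theta_3=\Theta_3H$, and it is a positive definite metric for $H$ whenever $|\alpha|,|\beta|,|\gamma|$ are sufficiently small.
   Context: $H^\dagger$ is the conjugate transpose. A metric for $H$ is a positive definite Hermitian matrix $\Theta$ with $H^\dagger\Theta=\Theta H$. $\Theta_0$ is the diagonal matrix with $(\Theta_0)_{nn}=(n-1)!/D_n(a)$; $\mathcal P_1$ is the real symmetric tridiagonal matrix with $(\mathcal P_1)_{11}=0$, $(\mathcal P_1)_{nn}=-2(n-1)(n-1)!/D_n(a)$ for $n\ge2$, $(\mathcal P_1)_{n,n+1}=(\mathcal P_1)_{n+1,n}=n!/D_n(a)$; $\mathcal P_2$ is any real symmetric pentadiagonal matrix with $H^\dagger\mathcal P_2=\mathcal P_2H$. All of $\Theta_0,\mathcal P_1,\mathcal P_2$ satisfy $H^\dagger X=XH$. Symmetric entries are understood: $(\mathcal P_3)_{ji}=(\mathcal P_3)_{ij}$. *)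

(* Defs.v *)
(* Real matrices over an abstract R : realType.
   Paper indices n = 1..N correspond to ordinals i : 'I_N with n = i.+1. *)
From mathcomp Require Import all_boot all_order all_algebra.
From mathcomp Require Import reals.
Set Implicit Arguments. Unset Strict Implicit. Unset Printing Implicit Defensive.
Import Order.TTheory GRing.Theory Num.Theory.
Local Open Scope ring_scope.

Section Defs.
Variable R : realType.

Definition Dn (a : R) (n : nat) : R := \prod_(1 <= j < n) (a + j%:R).

Definition Hmat (N : nat) (a : R) : 'M[R]_N :=
  \matrix_(i < N, j < N)
    (if j == i then a + (2 * i.+1 - 1)%:R
     else if j.+1 == i.+2 then - (i.+1)%:R          (* (n, n+1), n = i+1 *)
     else if i.+1 == j.+2 then - (a + (j.+1)%:R)    (* (m+1, m), m = j+1 *)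
     else 0).

(* H^dagger X = X H ; for a real matrix H^dagger is the transpose *)
Definition intertwines (N : nat) (H X : 'M[R]_N) : Prop := H^T *m X = X *m H.

Definition sym_mx (N : nat) (X : 'M[R]_N) : Prop := X^T = X.

Definition banded (N : nat) (k : nat) (X : 'M[R]_N) : Prop :=
  forall i j : 'I_N, ((i + k < j)%N || (j + k < i)%N) -> X i j = 0.

Definition posdef (N : nat) (X : 'M[R]_N) : Prop :=
  sym_mx X /\ forall x : 'cV[R]_N, x != 0 -> 0 < (x^T *m X *m x) ord0 ord0.

Definition is_metric (N : nat) (H X : 'M[R]_N) : Prop :=
  posdef X /\ intertwines H X.

Definition Theta0 (N : nat) (a : R) : 'M[R]_N :=
  \matrix_(i < N, j < N) (if j == i then (i`!)%:R / Dn a i.+1 else 0).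

Definition P1mat (N : nat) (a : R) : 'M[R]_N :=
  \matrix_(i < N, j < N)
    (if j == i then (if i == 0%N :> nat then 0
                     else - ((2 * i * i`!)%:R / Dn a i.+1))
     else if j.+1 == i.+2 then (i.+1)`!%:R / Dn a i.+1
     else if i.+1 == j.+2 then (j.+1)`!%:R / Dn a j.+1
     else 0).

Definition P3_entries (N : nat) (a : R) (P : 'M[R]_N) : Prop :=
  (forall i j : 'I_N, (i = 0 :> nat)%N -> (j = 0 :> nat)%N -> P i j = 0) /\
  (forall i j : 'I_N, (i = 0 :> nat)%N -> (j = 1 :> nat)%N -> P i j = 0) /\
  (forall i j : 'I_N, (i = 0 :> nat)%N -> (j = 2 :> nat)%N -> P i j = 0) /\
  (forall i j : 'I_N, (i = 1 :> nat)%N -> (j = 1 :> nat)%N -> P i j = 0) /\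
  (forall i j : 'I_N, (i = 0 :> nat)%N -> (j = 3 :> nat)%N -> P i j = 1) /\
  (forall i j : 'I_N, let n := i.+1 in (j = i :> nat) ->
     (2 <= n)%N -> (n <= N - 1)%N ->
     P i j = - ((2 * (n - 1) * (n - 2) * (n - 1)`!)%:R
                * (3 * a + (5 * n - 6)%:R) / (3 * Dn a n))) /\
  (forall i j : 'I_N, let n := i.+1 in (j = i.+1 :> nat) ->
     (2 <= n)%N -> (n <= N - 2)%N ->
     P i j = ((n - 1) * n`!)%:R * (a + (5 * n - 7)%:R) / (2 * Dn a n)) /\
  (forall i j : 'I_N, let n := i.+1 in (j = i.+2 :> nat) ->
     (2 <= n)%N -> (n <= N - 2)%N ->
     P i j = - (((n - 1) * n.+1`!)%:R / Dn a n)) /\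
  (forall i j : 'I_N, let n := i.+1 in (j = i.+3 :> nat) ->
     (2 <= n)%N -> (n <= N - 3)%N ->
     P i j = n.+2`!%:R / (6 * Dn a n)).

End Defs.

(* Main.v *)
Require Import Defs.
From mathcomp Require Import all_boot all_order all_algebra.
From mathcomp Require Import reals.
From mathcomp Require Import ring lra zify.
Set Implicit Arguments. Unset Strict Implicit. Unset Printing Implicit Defensive.
Import Order.TTheory GRing.Theory Num.Theory.
Local Open Scope ring_scope.

Section S.
Variable R : realType.

Lemma delta_sum (N : nat) (m : nat) (F : nat -> R) :
  \sum_(k < N) (if (k : nat) == m then F k else 0) = if (m < N)%N then F m else 0.
Proof.
elim: N => [|N IH]; first by rewrite big_ord0.
rewrite big_ord_recr /= IH.
case: eqP => [->|hne]; first by rewrite ltnn ltnSn add0r.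
rewrite addr0; case: ltnP => h1; case: ltnP => h2 //; exfalso; lia.
Qed.

Variable a : R.
Variable N : nat.

Definition hf (i j : nat) : R :=
  if j == i then a + (2 * i + 1)%:R
  else if j == i.+1 then - (i.+1)%:R
  else if i == j.+1 then - (a + (j.+1)%:R)
  else 0.

Lemma Hmat_hf : Hmat N a = \matrix_(i < N, j < N) hf i j.
Proof.
apply/matrixP => i j; rewrite !mxE /hf.
have -> : (2 * i.+1 - 1 = 2 * i + 1)%N by lia.
have -> : (j.+1 == i.+2) = ((j : nat) == i.+1) by [].
by have -> : (i.+1 == j.+2) = ((i : nat) == j.+1) by [].
Qed.

Lemma hf_split (i k : nat) (g : nat -> R) :
  hf i k * g k =
  (if (0 < i)%N then (if k == i.-1 then hf i k * g k else 0) else 0)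
   + (if k == i then hf i k * g k else 0)
   + (if k == i.+1 then hf i k * g k else 0).
Proof.
rewrite /hf.
case E1: (k == i); case E2: (k == i.+1); case E3: (i == k.+1);
  case E4: (0 < i)%N; case E5: (k == i.-1);
  rewrite ?mul0r ?add0r ?addr0 //; exfalso; lia.
Qed.

Lemma Hmul (f : nat -> nat -> R) :
  Hmat N a *m \matrix_(i < N, j < N) f i j =
  \matrix_(i < N, j < N)
    ((if (0 < i)%N then hf i i.-1 * f i.-1 j else 0) + hf i i * f i j
     + (if (i.+1 < N)%N then hf i i.+1 * f i.+1 j else 0)).
Proof.
rewrite Hmat_hf; apply/matrixP => i j; rewrite !mxE.
transitivity (\sum_(k < N)
  ((if (0 < i)%N then (if (k : nat) == i.-1 then hf i k * f k j else 0) else 0)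
   + (if (k : nat) == i then hf i k * f k j else 0)
   + (if (k : nat) == i.+1 then hf i k * f k j else 0))).
  by apply: eq_bigr => k _; rewrite !mxE; exact: (hf_split i k (fun k => f k j)).
rewrite !big_split /=.
rewrite (delta_sum N i (fun k => hf i k * f k j)).
rewrite (delta_sum N i.+1 (fun k => hf i k * f k j)) (ltn_ord i).
case: (posnP i) => hi.
  by rewrite hi big1 ?add0r // => k _.
rewrite (delta_sum N i.-1 (fun k => hf i k * f k j)).
by have -> : (i.-1 < N)%N by have := ltn_ord i; lia.
Qed.

Definition th (i : nat) : R := i`!%:R / Dn a i.+1.

Lemma ThetaM (M : 'M[R]_N) :
  Theta0 N a *m M = \matrix_(i < N, j < N) (th i * M i j).
Proof.
apply/matrixP => i j; rewrite !mxE.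
transitivity (\sum_(k < N) (if (k : nat) == i then th k * M i j else 0)).
  apply: eq_bigr => k _; rewrite !mxE.
  case: (eqVneq k i) => [->|hne]; first by rewrite !eqxx.
  have hne' : ((k : nat) == i) = false by apply/negbTE; rewrite val_eqE.
  by rewrite hne' mul0r.
by rewrite (delta_sum N i (fun k => th k * M i j)) ltn_ord.
Qed.

Lemma MTheta (M : 'M[R]_N) :
  M *m Theta0 N a = \matrix_(i < N, j < N) (M i j * th j).
Proof.
apply/matrixP => i j; rewrite !mxE.
transitivity (\sum_(k < N) (if (k : nat) == j then M i j * th k else 0)).
  apply: eq_bigr => k _; rewrite !mxE.
  case: (eqVneq k j) => [->|hne]; first by rewrite !eqxx.
  have hne' : ((k : nat) == j) = false by apply/negbTE; rewrite val_eqE.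
  by rewrite hne' mulr0.
by rewrite (delta_sum N j (fun k => M i j * th k)) ltn_ord.
Qed.

Hypothesis apos : 0 < a.

Lemma Dn1 : Dn a 1 = 1.
Proof. by rewrite /Dn big_geq. Qed.

Lemma DnS n : Dn a n.+2 = Dn a n.+1 * (a + (n.+1)%:R).
Proof. by rewrite /Dn big_nat_recr. Qed.

Lemma Dn_gt0 n : 0 < Dn a n.
Proof.
rewrite /Dn; apply: prodr_gt0 => k _.
by apply: ltr_wpDr => //; rewrite ler0n.
Qed.

Lemma Dn_neq0 n : Dn a n != 0.
Proof. by rewrite gt_eqF // Dn_gt0. Qed.

Lemma apn_neq0 n : a + n%:R != 0.
Proof. by rewrite gt_eqF // ltr_wpDr // ler0n. Qed.

Lemma pos1 n : 0 < a + (1 + n%:R).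
Proof. by apply: addr_gt0 => //; rewrite addrC natr1 ltr0Sn. Qed.

Lemma neqS n : (n == n.+1) = false.
Proof. by apply/eqP; lia. Qed.
Lemma neqS' n : (n.+1 == n) = false.
Proof. by apply/eqP; lia. Qed.
Lemma neqSS n : (n == n.+2) = false.
Proof. by apply/eqP; lia. Qed.

Lemma hf_th (i j : nat) : hf j i * th j = th i * hf i j.
Proof.
have [->|hne] := eqVneq j i; first by rewrite mulrC.
have [->|h1] := eqVneq i j.+1.
  rewrite /hf /th !eqxx neqS neqS' neqSS DnS factS natrM.
  by field; rewrite Dn_neq0 andbT gt_eqF // pos1.
have [->|h2] := eqVneq j i.+1.
  rewrite /hf /th !eqxx neqS neqS' neqSS DnS factS natrM.
  by field; rewrite Dn_neq0 gt_eqF // pos1.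
rewrite /hf (negbTE hne) (negbTE h1) (negbTE h2) eq_sym (negbTE hne).
  by rewrite mul0r mulr0.
Qed.

Notation H := (Hmat N a).
Notation T := (Theta0 N a).

Lemma HT : H^T *m T = T *m H.
Proof.
rewrite MTheta ThetaM; apply/matrixP => i j; rewrite Hmat_hf !mxE.
exact: hf_th.
Qed.

Lemma T_sym : T^T = T.
Proof.
apply/matrixP => i j; rewrite !mxE.
case: (eqVneq j i) => [->|hne]; first by [].
by [].
Qed.

Definition Qm (c0 c1 c2 c3 : R) : 'M[R]_N :=
  c0 *: 1%:M + c1 *: H + c2 *: (H *m H) + c3 *: (H *m (H *m H)).

Lemma Q_comm c0 c1 c2 c3 : H *m Qm c0 c1 c2 c3 = Qm c0 c1 c2 c3 *m H.
Proof.
rewrite /Qm !mulmxDr !mulmxDl -!scalemxAr -!scalemxAl mul1mx mulmx1 !mulmxA.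
done.
Qed.

Lemma TQ_inter c0 c1 c2 c3 :
  intertwines H (T *m Qm c0 c1 c2 c3).
Proof.
by rewrite /intertwines mulmxA HT -mulmxA Q_comm mulmxA.
Qed.

Lemma TQ_sym c0 c1 c2 c3 : sym_mx (T *m Qm c0 c1 c2 c3).
Proof.
rewrite /sym_mx trmx_mul T_sym /Qm !linearD /= !linearZ /= !trmx_mul trmx1.
rewrite !mulmxDl -!scalemxAl mul1mx mulmx1.
have h2 : H^T *m H^T *m T = T *m (H *m H) by rewrite -mulmxA HT mulmxA HT -mulmxA.
have h3 : H^T *m H^T *m H^T *m T = T *m (H *m (H *m H)).
  by rewrite -mulmxA HT mulmxA h2 -!mulmxA.
by rewrite HT h2 h3.
Qed.

Definition g1 (i j : nat) : R :=
  (if (0 < i)%N then hf i i.-1 * hf i.-1 j else 0) + hf i i * hf i j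
  + (if (i.+1 < N)%N then hf i i.+1 * hf i.+1 j else 0).
Definition g2 (i j : nat) : R :=
  (if (0 < i)%N then hf i i.-1 * g1 i.-1 j else 0) + hf i i * g1 i j
  + (if (i.+1 < N)%N then hf i i.+1 * g1 i.+1 j else 0).

Lemma H2E : H *m H = \matrix_(i < N, j < N) g1 i j.
Proof. by rewrite {2}Hmat_hf Hmul. Qed.

Lemma H3E : H *m (H *m H) = \matrix_(i < N, j < N) g2 i j.
Proof. by rewrite H2E Hmul. Qed.

Definition pf (c0 c1 c2 c3 : R) (i j : nat) : R :=
  th i * ((if i == j then c0 else 0) + c1 * hf i j + c2 * g1 i j + c3 * g2 i j).

Lemma TQE c0 c1 c2 c3 (i j : 'I_N) :
  (T *m Qm c0 c1 c2 c3) i j = pf c0 c1 c2 c3 i j.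
Proof.
rewrite ThetaM mxE /Qm H3E H2E Hmat_hf !mxE /pf.
by rewrite -val_eqE /=; case: eqP; rewrite ?mulr1 ?mulr0.
Qed.

Definition c0 := (a + 1) * (a + 2) * (a + 3) / 6.
Definition c1 := - ((a + 2) * (a + 3) / 2).
Definition c2 := (a + 3) / 2.
Definition c3 := - (1 / 6) : R.

Ltac crush := rewrite /pf /g2 /g1 /hf /=;
  repeat (case: ifP => ?; try (exfalso; lia)).

Lemma P3_diag m : (m.+3 <= N)%N ->
  pf c0 c1 c2 c3 m.+1 m.+1 =
  - ((2 * m.+1 * m * m.+1`!)%:R * (3 * a + (5 * m + 4)%:R) / (3 * Dn a m.+2)).
Proof.
move=> hN; crush; rewrite /th /c0 /c1 /c2 /c3;
  field; rewrite ?Dn_neq0 //.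
Qed.

Ltac fin := rewrite /th /c0 /c1 /c2 /c3 ?factS; field; rewrite ?Dn_neq0 //.

Lemma P3_up1 m : (m.+4 <= N)%N ->
  pf c0 c1 c2 c3 m.+1 m.+2 =
  (m.+1 * m.+2`!)%:R * (a + (5 * m + 3)%:R) / (2 * Dn a m.+2).
Proof. by move=> hN; crush; fin. Qed.

Lemma P3_up2 m : (m.+4 <= N)%N ->
  pf c0 c1 c2 c3 m.+1 m.+3 = - ((m.+1 * m.+3`!)%:R / Dn a m.+2).
Proof. by move=> hN; crush; fin. Qed.

Lemma P3_up3 m : (m.+4 < N)%N ->
  pf c0 c1 c2 c3 m.+1 m.+4 = (m.+4`!)%:R / (6 * Dn a m.+2).
Proof. by move=> hN; crush; fin. Qed.

Lemma P3_00 : (4 <= N)%N -> pf c0 c1 c2 c3 0 0 = 0.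
Proof. by move=> hN; crush; rewrite /th /c0 /c1 /c2 /c3 Dn1 /=; field. Qed.
Lemma P3_01 : (4 <= N)%N -> pf c0 c1 c2 c3 0 1 = 0.
Proof. by move=> hN; crush; rewrite /th /c0 /c1 /c2 /c3 Dn1 /=; field. Qed.
Lemma P3_02 : (4 <= N)%N -> pf c0 c1 c2 c3 0 2 = 0.
Proof. by move=> hN; crush; rewrite /th /c0 /c1 /c2 /c3 Dn1 /=; field. Qed.
Lemma P3_03 : (4 <= N)%N -> pf c0 c1 c2 c3 0 3 = 1.
Proof. by move=> hN; crush; rewrite /th /c0 /c1 /c2 /c3 Dn1 fact0 divr1 mul1r; field. Qed.
Lemma P3_11 : (4 <= N)%N -> pf c0 c1 c2 c3 1 1 = 0.
Proof. by move=> hN; crush; rewrite /th /c0 /c1 /c2 /c3 /Dn big_nat1 /=; field; rewrite gt_eqF // addr_gt0. Qed.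

Lemma aux1 i : - ((2 * i * i`!)%:R / Dn a i.+1) =
  th i * (a + 1 + -1 * (a + (2 * i + 1)%:R)).
Proof. rewrite /th; field. by rewrite Dn_neq0. Qed.

Lemma aux0 : 0 = th 0 * (a + 1 + -1 * (a + (2 * 0 + 1)%:R)).
Proof. rewrite /th Dn1 fact0 divr1 mul1r; ring. Qed.
Lemma aux2 i : (i.+1)`!%:R / Dn a i.+1 = th i * (0 + -1 * - (i.+1)%:R).
Proof. rewrite /th factS; field. by rewrite Dn_neq0. Qed.
Lemma aux3 j : (j.+1)`!%:R / Dn a j.+1 = th j.+1 * (0 + -1 * - (a + (j.+1)%:R)).
Proof. rewrite /th DnS factS; field. by rewrite Dn_neq0 gt_eqF // pos1. Qed.

Lemma P1E : P1mat N a = T *m Qm (a + 1) (-1) 0 0.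
Proof.
apply/matrixP => i j; rewrite TQE /pf !mul0r !addr0 !mxE -val_eqE /=.
move: (nat_of_ord i) (nat_of_ord j) => {}i {}j.
have [->|hne] := eqVneq j i.
  rewrite /hf !eqxx; case: (posnP i) => [->|hi]; first exact: aux0.
  exact: aux1.
rewrite !eqSS.
have [->|h1] := eqVneq j i.+1.
  rewrite /hf; repeat (case: ifP => ?; try (exfalso; lia)); exact: aux2.
have [->|h2] := eqVneq i j.+1.
  rewrite /hf; repeat (case: ifP => ?; try (exfalso; lia)); exact: aux3.
rewrite /hf; repeat (case: ifP => ?; try (exfalso; lia)).
by rewrite mulr0 addr0 mulr0.
Qed.

Lemma banded_mul k l (A B : 'M[R]_N) :
  banded k A -> banded l B -> banded (k + l) (A *m B).
Proof.
move=> hA hB i j hij; rewrite mxE big1 // => m _.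
case/orP: hij => h.
  case: (ltnP (i + k) m) => hm.
    by rewrite hA ?hm ?mul0r.
  by rewrite (hB m j) ?mulr0 //; apply/orP; left; lia.
case: (ltnP (m + k) i) => hm.
  by rewrite hA ?hm ?orbT ?mul0r.
by rewrite (hB m j) ?mulr0 //; apply/orP; right; lia.
Qed.

Lemma banded_add k (A B : 'M[R]_N) : banded k A -> banded k B -> banded k (A + B).
Proof. by move=> hA hB i j h; rewrite mxE hA // hB // addr0. Qed.

Lemma banded_scale k c (A : 'M[R]_N) : banded k A -> banded k (c *: A).
Proof. by move=> hA i j h; rewrite mxE hA // mulr0. Qed.

Lemma banded_mono k k' (A : 'M[R]_N) : (k <= k')%N -> banded k A -> banded k' A.
Proof. move=> hk hA i j h; apply: hA; case/orP: h => h; apply/orP; lia. Qed.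

Lemma banded_H : banded 1 H.
Proof.
move=> i j h; rewrite Hmat_hf mxE /hf.
by repeat (case: ifP => ?; try (exfalso; lia)).
Qed.

Lemma banded_1 : banded 0 (1%:M : 'M[R]_N).
Proof.
move=> i j h; rewrite mxE; case: eqP => // hij.
by exfalso; subst; lia.
Qed.

Lemma banded_T : banded 0 T.
Proof.
move=> i j h; rewrite mxE; case: eqP => // hij.
by exfalso; subst; lia.
Qed.

Lemma banded_TQ c0 c1 c2 c3 : banded 3 (T *m Qm c0 c1 c2 c3).
Proof.
suff hQ : banded 3 (Qm c0 c1 c2 c3) by exact: (banded_mul banded_T hQ).
rewrite /Qm; apply: banded_add; [apply: banded_add; [apply: banded_add|]|];
  apply: banded_scale.
- exact: banded_mono banded_1.
- exact: banded_mono banded_H.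
- exact: banded_mono (banded_mul banded_H banded_H).
- exact: (banded_mul banded_H (banded_mul banded_H banded_H)).
Qed.

Definition qform (X : 'M[R]_N) (x : 'cV[R]_N) : R := (x^T *m X *m x) ord0 ord0.

Lemma qformE X x :
  qform X x = \sum_(j < N) \sum_(i < N) x i ord0 * X i j * x j ord0.
Proof.
rewrite /qform mxE; apply: eq_bigr => j _; rewrite mxE mulr_suml.
by apply: eq_bigr => i _; rewrite mxE.
Qed.

Lemma qformD X Y x : qform (X + Y) x = qform X x + qform Y x.
Proof. by rewrite /qform mulmxDr mulmxDl mxE. Qed.

Lemma qformZ c X x : qform (c *: X) x = c * qform X x.
Proof. by rewrite /qform -scalemxAr -scalemxAl mxE. Qed.

Lemma th_gt0 i : 0 < th i.
Proof. by rewrite /th divr_gt0 ?Dn_gt0 // ltr0n fact_gt0. Qed.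

Definition tq (x : 'cV[R]_N) := \sum_(i < N) th i * x i ord0 ^+ 2.

Lemma qformT x : qform T x = tq x.
Proof.
rewrite qformE /tq; apply: eq_bigr => j _.
rewrite (bigD1 j) //= big1 ?addr0.
  by rewrite mxE eqxx mulrAC -expr2 mulrC.
by move=> i hij; rewrite mxE eq_sym (negbTE hij) mulr0 mul0r.
Qed.

Lemma tq_ge0 (x : 'cV[R]_N) : 0 <= tq x.
Proof.
by apply: sumr_ge0 => i _; apply: mulr_ge0; [apply: ltW; apply: th_gt0 | apply: sqr_ge0].
Qed.

Definition Kc := \sum_(i < N) (th i)^-1.

Lemma Kc_ge0 : 0 <= Kc.
Proof. by apply: sumr_ge0 => i _; rewrite invr_ge0 ltW // th_gt0. Qed.

Lemma sq_le (x : 'cV[R]_N) (k : 'I_N) : x k ord0 ^+ 2 <= Kc * tq x.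
Proof.
have h1 : x k ord0 ^+ 2 = (th k)^-1 * (th k * x k ord0 ^+ 2).
  by rewrite mulrA mulVf ?mul1r // gt_eqF // th_gt0.
have h2 : th k * x k ord0 ^+ 2 <= tq x.
  rewrite /tq (bigD1 k) //= lerDl; apply: sumr_ge0 => i _.
  by apply: mulr_ge0; [apply: ltW; apply: th_gt0 | apply: sqr_ge0].
have h3 : (th k)^-1 <= Kc.
  rewrite /Kc (bigD1 k) //= lerDl; apply: sumr_ge0 => i _.
  by rewrite invr_ge0 ltW // th_gt0.
rewrite h1; apply: ler_pM => //.
- by rewrite invr_ge0 ltW // th_gt0.
- by apply: mulr_ge0; [apply: ltW; apply: th_gt0 | apply: sqr_ge0].
Qed.

Lemma prod_le (u v c : R) : u ^+ 2 <= c -> v ^+ 2 <= c -> `|u * v| <= c.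
Proof.
move=> hu hv; rewrite ler_norml; apply/andP; split; nra.
Qed.

Definition Sm (M : 'M[R]_N) := \sum_(j < N) \sum_(i < N) `|M i j|.

Lemma Sm_ge0 M : 0 <= Sm M.
Proof. by apply: sumr_ge0 => j _; apply: sumr_ge0 => i _. Qed.

Lemma qform_bound M (x : 'cV[R]_N) : `|qform M x| <= Sm M * (Kc * tq x).
Proof.
rewrite qformE /Sm mulr_suml.
apply: le_trans (ler_norm_sum _ _ _) _; apply: ler_sum => j _.
rewrite mulr_suml; apply: le_trans (ler_norm_sum _ _ _) _; apply: ler_sum => i _.
rewrite mulrAC normrM [`|M i j| * _]mulrC; apply: ler_wpM2r => //.
by apply: prod_le; apply: sq_le.
Qed.

Lemma tq_gt0 (x : 'cV[R]_N) : x != 0 -> 0 < tq x.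
Proof.
move=> hx.
have [k hk] : exists k : 'I_N, x k ord0 != 0.
  apply/existsP; apply: contraR hx; rewrite negb_exists => /forallP h.
  apply/eqP/matrixP => i j; rewrite (ord1 j) mxE.
  by move: (h i); rewrite negbK => /eqP.
rewrite /tq (bigD1 k) //=; apply: ltr_pwDl.
  by apply: mulr_gt0; [apply: th_gt0 | rewrite lt_def sqrf_eq0 hk sqr_ge0].
apply: sumr_ge0 => i _.
by apply: mulr_ge0; [apply: ltW; apply: th_gt0 | apply: sqr_ge0].
Qed.

Lemma term_bound (al q B e : R) : `|q| <= B -> `|al| < e -> - (e * B) <= al * q.
Proof.
move=> hq hal.
have hB : 0 <= B by apply: le_trans hq.
have h1 : `|al * q| <= e * B.
  rewrite normrM; apply: ler_pM => //; exact: ltW.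
exact: lerNnormlW.
Qed.

Lemma small_pos (P1 P2 P3 : 'M[R]_N) :
  exists2 eps : R, 0 < eps &
    forall al be ga, `|al| < eps -> `|be| < eps -> `|ga| < eps ->
    forall x, x != 0 -> 0 < qform (T + al *: P1 + be *: P2 + ga *: P3) x.
Proof.
pose S := Sm P1 + Sm P2 + Sm P3.
have hS : 0 <= S by rewrite /S !addr_ge0 ?Sm_ge0.
have hSK : 0 <= S * Kc by rewrite mulr_ge0 // Kc_ge0.
have hd : 0 < S * Kc + 1 by rewrite ltr_wpDl.
exists (1 / (S * Kc + 1)); first by rewrite divr_gt0.
move=> al be ga h1 h2 h3 x hx.
set e := 1 / (S * Kc + 1) in h1 h2 h3 *.
have he : e * (S * Kc) = 1 - e by rewrite /e; field; rewrite gt_eqF.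
have ht := tq_gt0 hx.
have hep : 0 < e by rewrite /e divr_gt0.
set u := Kc * tq x.
have b1 := term_bound (qform_bound P1 x) h1.
have b2 := term_bound (qform_bound P2 x) h2.
have b3 := term_bound (qform_bound P3 x) h3.
rewrite !qformD !qformZ qformT.
have hsum : e * (Sm P1 * u) + e * (Sm P2 * u) + e * (Sm P3 * u) = tq x - e * tq x.
  have -> : e * (Sm P1 * u) + e * (Sm P2 * u) + e * (Sm P3 * u)
            = (e * (S * Kc)) * tq x by rewrite /u /S; ring.
  by rewrite he; ring.
have het : 0 < e * tq x by rewrite mulr_gt0.
rewrite /u in hsum; lra.
Qed.

Lemma inter_add (X Y : 'M[R]_N) : intertwines H X -> intertwines H Y -> intertwines H (X + Y).
Proof. by rewrite /intertwines => hX hY; rewrite mulmxDr mulmxDl hX hY. Qed.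
Lemma inter_scale c (X : 'M[R]_N) : intertwines H X -> intertwines H (c *: X).
Proof. by rewrite /intertwines => hX; rewrite -scalemxAr -scalemxAl hX. Qed.
Lemma sym_add (X Y : 'M[R]_N) : sym_mx X -> sym_mx Y -> sym_mx (X + Y).
Proof. by rewrite /sym_mx => hX hY; rewrite linearD /= hX hY. Qed.
Lemma sym_scale c (X : 'M[R]_N) : sym_mx X -> sym_mx (c *: X).
Proof. by rewrite /sym_mx => hX; rewrite linearZ /= hX. Qed.

End S.

Unset Implicit Arguments.
Set Strict Implicit.

Theorem lemma4 (R : realType) (N : nat) (a : R) :
  (4 <= N)%N -> 0 < a ->
  exists P3 : 'M[R]_N,
    [/\ sym_mx P3, banded 3 P3, intertwines (Hmat N a) P3,
        P3_entries a P3 &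
        forall P2 : 'M[R]_N,
          sym_mx P2 -> banded 2 P2 -> intertwines (Hmat N a) P2 ->
          (forall alpha beta gamma : R,
             intertwines (Hmat N a)
               (Theta0 N a + alpha *: P1mat N a + beta *: P2 + gamma *: P3)) /\
          (exists2 eps : R, 0 < eps &
             forall alpha beta gamma : R,
               `|alpha| < eps -> `|beta| < eps -> `|gamma| < eps ->
               is_metric (Hmat N a)
                 (Theta0 N a + alpha *: P1mat N a + beta *: P2 + gamma *: P3))].
Proof.
move=> hN apos.
exists (Theta0 N a *m Qm a N (c0 a) (c1 a) (c2 a) (@c3 R)).
have hsym3 := TQ_sym N apos (c0 a) (c1 a) (c2 a) (@c3 R).
have hint3 := TQ_inter N apos (c0 a) (c1 a) (c2 a) (@c3 R).
have hsym1 : sym_mx (P1mat N a) by rewrite P1E //; exact: TQ_sym.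
have hint1 : intertwines (Hmat N a) (P1mat N a) by rewrite P1E //; exact: TQ_inter.
have hsymT : sym_mx (Theta0 N a) by exact: T_sym.
have hintT : intertwines (Hmat N a) (Theta0 N a) by exact: HT.
split => //.
- exact: banded_TQ.
- repeat split.
  + by move=> i j hi hj; rewrite TQE hi hj; apply: P3_00.
  + by move=> i j hi hj; rewrite TQE hi hj; apply: P3_01.
  + by move=> i j hi hj; rewrite TQE hi hj; apply: P3_02.
  + by move=> i j hi hj; rewrite TQE hi hj; apply: P3_11.
  + by move=> i j hi hj; rewrite TQE hi hj; apply: P3_03.
  + move=> i j n hj h2 hN'; rewrite {}/n in h2 hN' *; rewrite TQE hj.
    case E: (nat_of_ord i) h2 hN' => [|m] // h2 hN'.
    have -> : (m.+2 - 1 = m.+1)%N by lia.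
    have -> : (m.+2 - 2 = m)%N by lia.
    have -> : (5 * m.+2 - 6 = 5 * m + 4)%N by lia.
    apply: P3_diag => //; lia.
  + move=> i j n hj h2 hN'; rewrite {}/n in h2 hN' *; rewrite TQE hj.
    case E: (nat_of_ord i) h2 hN' => [|m] // h2 hN'.
    have -> : (m.+2 - 1 = m.+1)%N by lia.
    have -> : (5 * m.+2 - 7 = 5 * m + 3)%N by lia.
    apply: P3_up1 => //; lia.
  + move=> i j n hj h2 hN'; rewrite {}/n in h2 hN' *; rewrite TQE hj.
    case E: (nat_of_ord i) h2 hN' => [|m] // h2 hN'.
    have -> : (m.+2 - 1 = m.+1)%N by lia.
    apply: P3_up2 => //; lia.
  + move=> i j n hj h2 hN'; rewrite {}/n in h2 hN' *; rewrite TQE hj.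
    case E: (nat_of_ord i) h2 hN' => [|m] // h2 hN'.
    apply: P3_up3 => //; lia.
- move=> P2 hs2 hb2 hi2; split.
    move=> al be ga.
    by repeat apply: inter_add; try apply: inter_scale.
  have [eps heps hpos] := small_pos apos (P1mat N a) P2
    (Theta0 N a *m Qm a N (c0 a) (c1 a) (c2 a) (@c3 R)).
  exists eps => // al be ga h1 h2 h3; split; last first.
    by repeat apply: inter_add; try apply: inter_scale.
  split.
    by repeat apply: sym_add; try apply: sym_scale.
  move=> x hx; exact: (hpos al be ga h1 h2 h3 x hx).
Qed.
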